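(* Let $(V,\mathrm d)$ and $(V_h,\mathrm d_h)$ be the domain complexes of closed Hilbert complexes $(W,\mathrm d)$ and $(W_h,\mathrm d_h)$ respectively, with morphisms $i_h\colon V_h\to V$ and $\pi_h\colon V\to V_h$ such that $\pi_h^k\circ i_h^k=\mathrm{id}_{V_h^k}$ for each $k$. Let $c_P$ be a constant such that $\|v\|_V\le c_P\|\mathrm d^kv\|_V$ for all $v\in(\mathfrak Z^k)^{\perp}$. Then \[\|v_h\|_{V_h}\le c_P\,\|\pi_h^k\|\,\|i_h^{k+1}\|\,\|\mathrm d_hv_h\|_h\quad\text{for all } v_h\in(\mathfrak Z_h^k)^{\perp},\] where $\|\cdot\|_h$ is the norm of $W_h^{k+1}$.
   Context: A Hilbert complex $(W,\mathrm d)$ is a sequence of Hilbert spaces $W^k$ with closed densely defined linear maps $\mathrm d^k\colon V^k\subset W^k\to V^{k+1}\subset W^{k+1}$ satisfying $\mathrm d^k\circ\mathrm d^{k-1}=0$; it is closed if each $\mathrm d^kV^k$ is closed in $W^{k+1}$. Its domain complex $(V,\mathrm d)$ consists of the domains $V^k$ with the graph inner product $\langle u,v\rangle_V=\langle u,v\rangle_{W}+\langle\mathrm d u,\mathrm d v\rangle_{W}$, and is a bounded Hilbert complex. A morphism $f\colon V\to V'$ of domain complexes is a sequence of bounded linear maps $f^k\colon V^k\to V'^k$ with $\mathrm d'^kf^k=f^{k+1}\mathrm d^k$. $\mathfrak Z^k=\ker\mathrm d^k$ and $\mathfrak Z_h^k=\ker\mathrm d_h^k$, with orthogonal complements taken in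 $V^k$ and $V_h^k$ respectively. Operator norms $\|\pi_h^k\|$, $\|i_h^{k+1}\|$ are with respect to the $V$ and $V_h$ norms. *)

(* Defs.v *)
From HB Require Import structures.
From mathcomp Require Import all_boot all_order all_algebra.
From mathcomp Require Import all_classical all_reals all_analysis.
Set Implicit Arguments. Unset Strict Implicit. Unset Printing Implicit Defensive.
Import Order.TTheory GRing.Theory Num.Theory.
Import numFieldNormedType.Exports.
Local Open Scope classical_set_scope.
Local Open Scope ring_scope.

(* Raw data of a (real) Hilbert complex indexed by nat:
   spaces W^k (complete normed spaces carrying an inner product),
   domains V^k ⊂ W^k, and operators d^k : V^k -> W^{k+1}
   (represented as total functions; only their values on V^k matter). *)
Record hcomplex (R : realType) := HComplex {
  hc_W : nat -> completeNormedModType R;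
  hc_ip : forall k, hc_W k -> hc_W k -> R;
  hc_dom : forall k, set (hc_W k);
  hc_d : forall k, hc_W k -> hc_W k.+1 }.

Arguments hc_ip {R} _ {k}.
Arguments hc_d {R} _ {k}.
Arguments hc_dom {R} _ _.
Arguments hc_W {R} _ _.

Definition is_inner_product (R : realType) (X : normedModType R)
  (ip : X -> X -> R) : Prop :=
  [/\ forall x y, ip x y = ip y x,
      forall x y z, ip (x + y) z = ip x z + ip y z,
      forall (a : R) x y, ip (a *: x) y = a * ip x y
    & forall x, ip x x = `|x| ^+ 2].

Definition is_subspace (R : realType) (X : normedModType R) (S : set X) : Prop :=
  [/\ S 0, forall x y, S x -> S y -> S (x + y)
    & forall (a : R) x, S x -> S (a *: x)].

Definition closed_hilbert_complex (R : realType) (C : hcomplex R) : Prop :=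
  forall k,
  [/\ is_inner_product (hc_ip C (k:=k)),
      is_subspace (hc_dom C k) &
      [/\ (forall (a : R) x y, hc_dom C k x -> hc_dom C k y ->
          hc_d C (a *: x + y) = a *: hc_d C x + hc_d C y),
      closure (hc_dom C k) = setT,
      closed [set xy : (hc_W C k * hc_W C k.+1)%type |
                 hc_dom C k xy.1 /\ xy.2 = hc_d C xy.1] &
      [/\ (forall x, hc_dom C k x -> hc_dom C k.+1 (hc_d C x)),
      (forall x, hc_dom C k x -> hc_d C (hc_d C x) = 0) &
      closed (hc_d C @` hc_dom C k)]]].

(* graph inner product and norm of the domain complex V *)
Definition Vip (R : realType) (C : hcomplex R) (k : nat) (u v : hc_W C k) : R :=
  hc_ip C u v + hc_ip C (hc_d C u) (hc_d C v).

Definition Vnorm (R : realType) (C : hcomplex R) (k : nat) (u : hc_W C k) : R :=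
  Num.sqrt (Vip u u).

Definition Zk (R : realType) (C : hcomplex R) (k : nat) : set (hc_W C k) :=
  [set z | hc_dom C k z /\ hc_d C z = 0].

Arguments Zk {R} C k.

Definition Zperp (R : realType) (C : hcomplex R) (k : nat) : set (hc_W C k) :=
  [set v | hc_dom C k v /\ forall z, Zk C k z -> Vip v z = 0].

Arguments Zperp {R} C k.

Definition dc_morphism (R : realType) (C C' : hcomplex R)
  (f : forall k, hc_W C k -> hc_W C' k) : Prop :=
  forall k,
  [/\ forall v, hc_dom C k v -> hc_dom C' k (f k v),
      (forall (a : R) x y, hc_dom C k x -> hc_dom C k y ->
          f k (a *: x + y) = a *: f k x + f k y),
      (exists M : R, forall v, hc_dom C k v ->
          Vnorm (f k v) <= M * Vnorm v)
    & forall v, hc_dom C k v -> hc_d C' (f k v) = f k.+1 (hc_d C v)].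

Definition opnorm (R : realType) (C C' : hcomplex R)
  (f : forall k, hc_W C k -> hc_W C' k) (k : nat) : R :=
  sup [set Vnorm (f k v) | v in [set v | hc_dom C k v /\ Vnorm v <= 1]].

(* Main.v *)
Require Import Defs.
From HB Require Import structures.
From mathcomp Require Import all_boot all_order all_algebra.
From mathcomp Require Import all_classical all_reals all_analysis.
From mathcomp Require Import ring lra.
Import Order.TTheory GRing.Theory Num.Theory.
Import numFieldNormedType.Exports.
Local Open Scope classical_set_scope.
Local Open Scope ring_scope.

Section IP.
Variables (R : realType) (X : normedModType R) (ip : X -> X -> R).
Hypothesis hip : is_inner_product ip.

Lemma ipC x y : ip x y = ip y x. Proof. by case: hip. Qed.
Lemma ipDl x y z : ip (x + y) z = ip x z + ip y z. Proof. by case: hip. Qed.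
Lemma ipZl (a : R) x y : ip (a *: x) y = a * ip x y. Proof. by case: hip. Qed.
Lemma ipnorm x : ip x x = `|x| ^+ 2. Proof. by case: hip. Qed.
Lemma ipDr x y z : ip x (y + z) = ip x y + ip x z.
Proof. by rewrite ipC ipDl !(ipC x). Qed.
Lemma ipZr (a : R) x y : ip x (a *: y) = a * ip x y.
Proof. by rewrite ipC ipZl ipC. Qed.
Lemma ip0l x : ip 0 x = 0.
Proof. by rewrite -(scale0r 0) ipZl mul0r. Qed.
Lemma ip0r x : ip x 0 = 0.
Proof. by rewrite ipC ip0l. Qed.
Lemma ipNl x y : ip (- x) y = - ip x y.
Proof. by rewrite -scaleN1r ipZl mulN1r. Qed.
Lemma ipNr x y : ip x (- y) = - ip x y.
Proof. by rewrite -scaleN1r ipZr mulN1r. Qed.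
Lemma ipBl x y z : ip (x - y) z = ip x z - ip y z.
Proof. by rewrite ipDl ipNl. Qed.
Lemma ipBr x y z : ip x (y - z) = ip x y - ip x z.
Proof. by rewrite ipDr ipNr. Qed.

Lemma norm_expand (x y : X) (t : R) :
  `|x - t *: y| ^+ 2 = `|x| ^+ 2 - 2 * t * ip x y + t ^+ 2 * `|y| ^+ 2.
Proof.
rewrite -!ipnorm ipBl !ipBr !ipZl !ipZr (ipC y x).
rewrite expr2; lra.
Qed.

Lemma parallelogram (x y : X) :
  `|x - y| ^+ 2 + `|x + y| ^+ 2 = 2 * `|x| ^+ 2 + 2 * `|y| ^+ 2.
Proof.
rewrite -!ipnorm ipBl !ipBr ipDl !ipDr (ipC y x); lra.
Qed.
End IP.

Lemma proj_thm (R : realType) (W : completeNormedModType R) (ip : W -> W -> R)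
  (hip : is_inner_product ip) (Z : set W) :
  is_subspace Z -> closed Z -> forall u : W,
  exists2 z, Z z & forall z', Z z' -> ip (u - z) z' = 0.
Proof.
move=> [Z0 ZD ZZ] cZ u.
pose S := [set `|u - z| ^+ 2 | z in Z].
have S0 : S !=set0 by exists (`|u - 0| ^+ 2), 0.
have Slb : has_lbound S by exists 0 => _ [z _ <-]; exact: exprn_ge0.
pose d2 := inf S.
have hlb z : Z z -> d2 <= `|u - z| ^+ 2.
  by move=> Zz; apply: ge_inf => //; exists z.
have hex (n : nat) : exists z, Z z /\ `|u - z| ^+ 2 < d2 + n.+1%:R^-1.
  have : d2 < d2 + n.+1%:R^-1 by rewrite ltrDl invr_gt0 ltr0n.
  by move=> /(inf_lt S0) [_ [z Zz <-] lt]; exists z.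
have [zs hzs] := choice hex.
have hmid n m : `|zs m - zs n| ^+ 2 <= 2 * n.+1%:R^-1 + 2 * m.+1%:R^-1.
  have [Zn hn] := hzs n; have [Zm hm] := hzs m.
  have := @parallelogram _ _ _ hip (u - zs n) (u - zs m).
  have -> : (u - zs n) - (u - zs m) = zs m - zs n.
    by rewrite opprB addrC addrA subrK.
  have -> : (u - zs n) + (u - zs m) = 2 *: (u - 2^-1 *: (zs n + zs m)).
    rewrite scalerBr scalerA mulrV ?unitfE ?pnatr_eq0 // scale1r.
    by rewrite scaler_nat mulr2n opprD !addrA; congr (_ + _); rewrite addrAC.
  rewrite normrZ ger0_norm // exprMn.
  have := hlb _ (ZZ 2^-1 _ (ZD _ _ Zn Zm)).
  move: (n.+1%:R^-1) (m.+1%:R^-1) hn hm => a b hn hm h1 h2.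
  rewrite (_ : 2 ^+ 2 = 4) in h2; last by rewrite expr2; lra.
  lra.
have cz : cvg (zs @ \oo).
  apply/cauchy_cvgP/cauchy_exP => e e0.
  have [N hN] : exists N : nat, 0 + N.+1%:R^-1 < e ^+ 2 / 4.
    by apply: ltr_add_invr; rewrite divr_gt0 // exprn_gt0.
  exists (zs N); exists N => // n /= Nn.
  rewrite -ball_normE /ball_ /=.
  have h1 := hmid N n; rewrite distrC in h1.
  have h2 : n.+1%:R^-1 <= N.+1%:R^-1 :> R.
    by rewrite lef_pV2 ?posrE // ler_nat.
  have h3 : 0 <= `|zs N - zs n| by [].
  move: (n.+1%:R^-1) (N.+1%:R^-1) h1 h2 hN => a b h1 h2 hN.
  have hx : `|zs N - zs n| ^+ 2 < e ^+ 2 by lra.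
  move: (`|zs N - zs n|) h3 hx => x h3 hx.
  rewrite !expr2 in hx; nra.
pose l := lim (zs @ \oo).
have hl : zs @ \oo --> l := cz.
have Zl : Z l.
  by apply: (closed_cvg _ cZ _ _ hl); apply: nearW => n; case: (hzs n).
have hul : `|u - l| ^+ 2 <= d2.
  have c1 : (fun n => `|u - zs n| ^+ 2) @ \oo --> `|u - l| ^+ 2.
    have c0 : (fun n => `|u - zs n|) @ \oo --> `|u - l|.
      by apply: cvg_norm; apply: cvgB => //; exact: cvg_cst.
    under eq_fun do rewrite expr2.
    by rewrite expr2; apply: cvgM.
  have c2 : (fun n : nat => d2 + n.+1%:R^-1) @ \oo --> d2.
    rewrite -[X in _ --> X]addr0; apply: cvgD; first exact: cvg_cst.
    exact: cvg_harmonic.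
  apply: (ler_cvg_to c1 c2); apply: nearW => n.
  by case: (hzs n) => _ /ltW.
exists l => // z' Zz'.
pose a := ip (u - l) z'.
pose c := `|z'| ^+ 2.
have ht t : 0 <= - 2 * t * a + t ^+ 2 * c.
  have := hlb _ (ZD _ _ Zl (ZZ t _ Zz')).
  rewrite opprD addrA (@norm_expand _ _ _ hip) -/a -/c; lra.
have c0 : 0 <= c by exact: exprn_ge0.
pose s := (c + 1)^-1.
have s0 : 0 < s by rewrite invr_gt0; lra.
have hs : s * (c + 1) = 1 by rewrite mulVf //; lra.
have h := ht (a * s).
rewrite -/a; clearbody a s c.
have sc : s * c = 1 - s by move: hs; rewrite mulrDr mulr1; lra.
have h2 : 0 <= s * (a ^+ 2 * (s * c) - 2 * a ^+ 2).
  by move: h; congr (_ <= _); ring.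
rewrite sc pmulr_rge0 // in h2.
have h3 : 0 <= s * a ^+ 2 by rewrite mulr_ge0 ?sqr_ge0 // ltW.
have : a ^+ 2 <= 0.
  move: h2 h3; move: (a ^+ 2) => A; nra.
by move=> ha; apply/eqP; rewrite -sqrf_eq0 eq_le sqr_ge0 andbT.
Qed.

Section Cx.
Local Set Implicit Arguments. Local Unset Strict Implicit.
Variables (R : realType) (C : hcomplex R).
Hypothesis H : closed_hilbert_complex C.

Lemma cx_ip k : is_inner_product (hc_ip C (k:=k)).
Proof. by case: (H k). Qed.
Lemma dom0 k : hc_dom C k 0.
Proof. by case: (H k) => _ [] . Qed.
Lemma domD k x y : hc_dom C k x -> hc_dom C k y -> hc_dom C k (x + y).
Proof. by case: (H k) => _ [] _ h _ _; apply: h. Qed.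
Lemma domZ k (a : R) x : hc_dom C k x -> hc_dom C k (a *: x).
Proof. by case: (H k) => _ [] _ _ h _; apply: h. Qed.
Lemma domB k x y : hc_dom C k x -> hc_dom C k y -> hc_dom C k (x - y).
Proof. by move=> hx hy; rewrite -scaleN1r; apply: domD => //; apply: domZ. Qed.
Lemma dlin k (a : R) (x y : hc_W C k) : hc_dom C k x -> hc_dom C k y ->
  hc_d C (a *: x + y) = a *: hc_d C x + hc_d C y.
Proof. by case: (H k) => _ _ [h _ _ _]; apply: h. Qed.
Lemma d0 k : hc_d C (0 : hc_W C k) = 0.
Proof.
have := dlin (-1) (dom0 k) (dom0 k).
by rewrite scaler0 add0r scaleN1r addNr.
Qed.
Lemma dZ k (a : R) (x : hc_W C k) : hc_dom C k x -> hc_d C (a *: x) = a *: hc_d C x.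
Proof. by move=> hx; have := dlin a hx (dom0 k); rewrite !addr0 d0 addr0. Qed.
Lemma dD k (x y : hc_W C k) : hc_dom C k x -> hc_dom C k y ->
  hc_d C (x + y) = hc_d C x + hc_d C y.
Proof. by move=> hx hy; have := dlin 1 hx hy; rewrite !scale1r. Qed.
Lemma dB k (x y : hc_W C k) : hc_dom C k x -> hc_dom C k y ->
  hc_d C (x - y) = hc_d C x - hc_d C y.
Proof.
move=> hx hy; rewrite -scaleN1r addrC dlin // ?scaleN1r addrC //.
Qed.
Lemma domd k (x : hc_W C k) : hc_dom C k x -> hc_dom C k.+1 (hc_d C x).
Proof. by case: (H k) => _ _ [_ _ _ [h _ _]]; apply: h. Qed.
Lemma dd k (x : hc_W C k) : hc_dom C k x -> hc_d C (hc_d C x) = 0.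
Proof. by case: (H k) => _ _ [_ _ _ [_ h _]]; apply: h. Qed.

Lemma Vip_norm k (x : hc_W C k) : Vip x x = `|x| ^+ 2 + `|hc_d C x| ^+ 2.
Proof. by rewrite /Vip !(@ipnorm _ _ _ (cx_ip _)). Qed.
Lemma Vnorm_ge0 k (x : hc_W C k) : 0 <= Vnorm x.
Proof. exact: sqrtr_ge0. Qed.
Lemma Vnorm0 k (x : hc_W C k) : Vnorm x = 0 -> x = 0.
Proof.
move=> /eqP; rewrite /Vnorm sqrtr_eq0 Vip_norm => h.
have h1 := sqr_ge0 `|x|; have h2 := sqr_ge0 `|hc_d C x|.
have : `|x| ^+ 2 = 0 by lra.
by move/eqP; rewrite sqrf_eq0 normr_eq0 => /eqP.
Qed.
Lemma Vnorm_zero k : Vnorm (0 : hc_W C k) = 0.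
Proof. by rewrite /Vnorm Vip_norm d0 !normr0 expr0n /= addr0 sqrtr0. Qed.
Lemma VnormZ k (a : R) (x : hc_W C k) : hc_dom C k x ->
  Vnorm (a *: x) = `|a| * Vnorm x.
Proof.
move=> hx; rewrite /Vnorm !Vip_norm dZ // !normrZ !exprMn -mulrDr.
by rewrite sqrtrM ?sqr_ge0 // sqrtr_sqr normr_id.
Qed.
Lemma Vnorm_closed k (y : hc_W C k) : hc_d C y = 0 -> Vnorm y = `|y|.
Proof.
by move=> hy; rewrite /Vnorm Vip_norm hy normr0 expr0n /= addr0 sqrtr_sqr normr_id.
Qed.

Lemma Vnorm_pyth k (x e : hc_W C k) : hc_dom C k x -> hc_dom C k e ->
  Vip x e = 0 -> Vnorm x <= Vnorm (x - e).
Proof.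
move=> hx he hxe; rewrite /Vnorm ler_sqrt; last first.
  by rewrite Vip_norm addr_ge0 ?sqr_ge0.
rewrite !Vip_norm dB //.
have h1 := @norm_expand _ _ _ (cx_ip k) x e 1.
have h2 := @norm_expand _ _ _ (cx_ip k.+1) (hc_d C x) (hc_d C e) 1.
rewrite !scale1r in h1 h2; rewrite h1 h2.
move: hxe; rewrite /Vip => hxe.
have := sqr_ge0 `|e|; have := sqr_ge0 `|hc_d C e|; lra.
Qed.

Lemma Zclosed k : closed (Zk C k).
Proof.
case: (H k) => _ _ [_ _ G _].
have -> : Zk C k = (fun x => (x, 0 : hc_W C k.+1)) @^-1`
   [set xy : (hc_W C k * hc_W C k.+1)%type | hc_dom C k xy.1 /\ xy.2 = hc_d C xy.1].
  by apply/seteqP; split => x /= [h1 h2]; split.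
apply: preimage_closed => // x _; apply: cvg_pair; [exact: cvg_id | exact: cvg_cst].
Qed.

Lemma Zsub k : is_subspace (Zk C k).
Proof.
split; first by split; [exact: dom0 | exact: d0].
  by move=> x y [hx dx] [hy dy]; split; [exact: domD | rewrite dD // dx dy addr0].
by move=> a x [hx dx]; split; [exact: domZ | rewrite dZ // dx scaler0].
Qed.

End Cx.

Section Op.
Variables (R : realType) (C C' : hcomplex R) (f : forall k, hc_W C k -> hc_W C' k).
Hypotheses (H : closed_hilbert_complex C) (H' : closed_hilbert_complex C')
  (hf : dc_morphism f).

Lemma f0 k : f k 0 = 0.
Proof.
case: (hf k) => _ hl _ _.
have := hl (-1) 0 0 (dom0 H k) (dom0 H k).
by rewrite scaler0 add0r scaleN1r addNr.
Qed.
Lemma fZ k (a : R) x : hc_dom C k x -> f k (a *: x) = a *: f k x.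
Proof.
case: (hf k) => _ hl _ _ hx.
by have := hl a x 0 hx (dom0 H k); rewrite !addr0 f0 addr0.
Qed.

Let E k := [set Vnorm (f k v) | v in [set v | hc_dom C k v /\ Vnorm v <= 1]].

Lemma ubE k : has_ubound (E k).
Proof.
case: (hf k) => _ _ [M hM] _.
exists `|M| => _ [x [dx x1] <-].
apply: le_trans (hM x dx) _.
have := Vnorm_ge0 x; have := ler_norm M; have := normr_ge0 M; nra.
Qed.

Lemma opnorm_ge0 k : 0 <= opnorm f k.
Proof.
have h : E k (Vnorm (f k 0)).
  by exists 0 => //; split; [exact: dom0 | rewrite Vnorm_zero].
have h2 := ub_le_sup (ubE k) h.
exact: le_trans (Vnorm_ge0 _) h2.
Qed.

Lemma opnorm_bound k v : hc_dom C k v -> Vnorm (f k v) <= opnorm f k * Vnorm v.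
Proof.
move=> dv; case: (hf k) => fdom _ [M hM] _.
have [v0|vpos] := eqVneq (Vnorm v) 0.
  by have := hM v dv; rewrite v0 !mulr0.
have spos : 0 < Vnorm v by rewrite lt_def vpos Vnorm_ge0.
pose v' := (Vnorm v)^-1 *: v.
have dv' : hc_dom C k v' by exact: domZ.
have h : E k (Vnorm (f k v')).
  exists v' => //; split => //.
  by rewrite VnormZ // ger0_norm ?invr_ge0 ?(ltW spos) // mulVf.
have := ub_le_sup (ubE k) h.
rewrite fZ // (VnormZ H' _ (fdom _ dv)) ger0_norm ?invr_ge0 ?(ltW spos) // => hle.
rewrite -(mulfK vpos (Vnorm (f k v))) mulrC mulrA.
have : (Vnorm v)^-1 * Vnorm (f k v) * Vnorm v <= opnorm f k * Vnorm v.
  by rewrite ler_pM2r.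
by rewrite mulrC mulrA.
Qed.
End Op.

Theorem mainTheorem5 (R : realType) (C Ch : hcomplex R)
  (ih : forall k, hc_W Ch k -> hc_W C k)
  (pih : forall k, hc_W C k -> hc_W Ch k)
  (k : nat) (cP : R) :
  closed_hilbert_complex C ->
  closed_hilbert_complex Ch ->
  dc_morphism ih ->
  dc_morphism pih ->
  (forall j (vh : hc_W Ch j), hc_dom Ch j vh -> pih j (ih j vh) = vh) ->
  (forall v : hc_W C k, Zperp C k v -> Vnorm v <= cP * Vnorm (hc_d C v)) ->
  forall vh : hc_W Ch k, Zperp Ch k vh ->
    Vnorm vh <= cP * opnorm pih k * opnorm ih k.+1 * `|hc_d Ch vh|.
Proof.
move=> HC HCh hi hp hpi hcP vh [dvh pvh].
have [idom _ _ icom] := hi k.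
have [idom1 _ _ _] := hi k.+1.
have [pdom _ _ pcom] := hp k.
have [pdom1 _ _ _] := hp k.+1.
pose u := ih k vh.
have du : hc_dom C k u by exact: idom.
have [z Zz hz] := @proj_thm _ _ _ (cx_ip HC k) _ (Zsub HC k) (@Zclosed _ _ HC k) u.
case: (Zz) => dz dz0.
pose w := u - z.
have dw : hc_dom C k w by exact: domB.
have dww : hc_d C w = hc_d C u by rewrite /w dB // dz0 subr0.
have wperp : Zperp C k w.
  split => // z' [dz' dz'0].
  by rewrite /Vip hz // dz'0 (@ip0r _ _ _ (cx_ip HC k.+1)) addr0.
have hw1 := hcP w wperp.
pose y := hc_d Ch vh.
have dy : hc_dom Ch k.+1 y by exact: domd.
have yy : hc_d Ch y = 0 by exact: dd.
have hdu : hc_d C u = ih k.+1 y by rewrite /u icom.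
have hN : Vnorm (hc_d C w) <= opnorm ih k.+1 * `|y|.
  rewrite dww hdu -(Vnorm_closed HCh yy).
  exact: (@opnorm_bound _ _ _ _ HCh HC hi).
have hpy : hc_d Ch (pih k w) = y by rewrite pcom // dww hdu hpi.
pose e := vh - pih k w.
have de : hc_dom Ch k e by apply: domB => //; exact: pdom.
have Ze : Zk Ch k e.
  split => //; rewrite /e (dB HCh) //; last exact: pdom.
  by rewrite hpy subrr.
have hP : Vnorm vh <= Vnorm (pih k w).
  have -> : pih k w = vh - e by rewrite /e opprB addrC subrK.
  exact: (Vnorm_pyth HCh dvh de (pvh _ Ze)).
have hw : Vnorm (pih k w) <= opnorm pih k * Vnorm w by exact: (@opnorm_bound _ _ _ _ HC HCh hp).
have P0 := @opnorm_ge0 _ _ _ _ HC hp k.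
have I0 := @opnorm_ge0 _ _ _ _ HCh hi k.+1.
have Vw0 := Vnorm_ge0 w.
have Vdw0 := Vnorm_ge0 (hc_d C w).
have ny0 := normr_ge0 y.
have [c0|c0] := leP 0 cP.
  move: (opnorm pih k) (opnorm ih k.+1) (Vnorm w) (Vnorm (hc_d C w)) P0 I0 Vw0 Vdw0
    hw1 hN hw hP => P I a b P0 I0 Vw0 Vdw0 hw1 hN hw hP.
  have h1 : P * a <= P * (cP * b) by rewrite ler_wpM2l.
  have h2 : P * cP * b <= P * cP * (I * `|y|).
    by rewrite ler_wpM2l // mulr_ge0.
  rewrite -/y. 
  have -> : cP * P * I * `|y| = P * cP * (I * `|y|) by ring.
  rewrite mulrA in h1; lra.
have hb : Vnorm (hc_d C w) = 0 by nra.
have y0 : y = 0.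
  have := Vnorm0 HC hb; rewrite dww hdu => h0.
  by rewrite -(hpi _ y dy) h0 (@f0 _ _ _ _ HC hp).
rewrite -/y y0 normr0 mulr0.
rewrite hb mulr0 in hw1.
have w0 : Vnorm w = 0 by apply/eqP; rewrite eq_le hw1 Vw0.
rewrite w0 mulr0 in hw; exact: le_trans hP hw.
Qed.
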